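(* Let $p$ be a prime and $\chi$ a primitive Dirichlet character modulo $p^m$ ($m\ge1$). Then for all integers $n\ge m$ and $k\ge0$, $$S_k(p^n,\chi)\equiv0\pmod{p^{n-1}}.$$ Furthermore, when $p=2$: if $m\ge3$, or $m=2$ and $k$ is even, or $m=1$ and $k$ is odd, then for all $n\ge\max\{m,2\}$, $$S_k(2^n,\chi)\equiv0\pmod{2^n}.$$
   Context: $S_k(N,\chi)=\sum_{j=1}^N\chi(j)j^k$. Values lie in the ring of algebraic integers of the cyclotomic field generated by the values of $\chi$, where congruences are taken. *)

(* Defs.v *)
From HB Require Import structures.
From mathcomp Require Import all_boot all_order all_algebra all_field.
Set Implicit Arguments. Unset Strict Implicit. Unset Printing Implicit Defensive.
Import Order.TTheory GRing.Theory Num.Theory.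
Local Open Scope ring_scope.

Definition dirichlet_char (N : nat) (chi : nat -> algC) : Prop :=
  [/\ (0 < N)%N,
      chi 1%N = 1,
      (forall a b : nat, chi (a * b)%N = chi a * chi b),
      (forall a : nat, chi (a + N)%N = chi a) &
      (forall a : nat, (chi a == 0) = ~~ coprime a N)].

(* chi mod N is primitive: there is no proper divisor d of N that is an
   induced modulus, i.e. for every d | N with d < N there is some a coprime
   to N with a = 1 (mod d) and chi a <> 1. *)
Definition primitive_char (N : nat) (chi : nat -> algC) : Prop :=
  forall d : nat, (d %| N)%N -> (d < N)%N ->
    exists a : nat, [/\ coprime a N, (a = 1 %[mod d])%N & chi a != 1].

Definition Schar (k N : nat) (chi : nat -> algC) : algC :=
  \sum_(1 <= j < N.+1) chi j * (j%:R) ^+ k.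

(* x = 0 mod q in the ring of integers O_K of the number field K = Q(values of chi),
   for x in O_K: x/q lies in K, so this is equivalent to x/q being an algebraic integer. *)
Definition cong0_mod (x : algC) (q : nat) : Prop := x / q%:R \in Aint.

(* Main.v *)
Require Import Defs.
From mathcomp Require Import all_boot all_order all_algebra all_fingroup all_solvable all_field.
From mathcomp Require Import zify ring lra.
Import Order.TTheory GRing.Theory Num.Theory.
Set Implicit Arguments. Unset Strict Implicit.
Local Open Scope ring_scope.

Lemma chi_per N chi : dirichlet_char N chi -> forall a q, chi (a + q * N)%N = chi a.
Proof.
case=> _ _ _ hP _ a q; elim: q => [|q IH]; first by rewrite mul0n addn0.
by rewrite mulSn addnCA [(N + _)%N]addnC hP IH.
Qed.

Lemma chi_mod N chi : dirichlet_char N chi -> forall a, chi (a %% N)%N = chi a.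
Proof.
move=> hD a; rewrite {2}(divn_eq a N) addnC.
by rewrite (chi_per hD).
Qed.

Lemma chi_expn N chi : dirichlet_char N chi -> forall a t, chi (a ^ t)%N = chi a ^+ t.
Proof.
case=> _ h1 hM _ _ a; elim=> [|t IH]; first by rewrite expn0 expr0 h1.
by rewrite expnS hM IH exprS.
Qed.

Lemma chi_Aint N chi : dirichlet_char N chi -> forall a, chi a \in Aint.
Proof.
move=> hD a; have hD' := hD; case: hD' => hN h1 hM _ hC.
case: (boolP (coprime a N)) => ca; last first.
  by have /eqP -> : chi a == 0 by rewrite hC ca.
have tpos : (0 < totient N)%N by rewrite totient_gt0.
apply: (Aint_unity_root tpos); rewrite unity_rootE.
by rewrite -(chi_expn hD) -(chi_mod hD) Euler_exp_totient // (chi_mod hD) h1.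
Qed.

Lemma chi0p p m chi : prime p -> (1 <= m)%N -> dirichlet_char (p ^ m) chi ->
  forall a, (p %| a)%N -> chi a = 0.
Proof.
move=> hp hm hD a pa; case: hD => _ _ _ _ hC; apply/eqP; rewrite hC.
by rewrite coprime_pexpr // coprime_sym prime_coprime // pa.
Qed.

Definition dv (q : nat) (x : algC) := exists2 y, y \in Aint & x = q%:R * y.

Lemma dv_cong q x : (0 < q)%N -> dv q x -> cong0_mod x q.
Proof.
move=> q0 [y yA ->]; rewrite /cong0_mod mulrC mulKf //.
by rewrite pnatr_eq0 -lt0n.
Qed.
Lemma t1 (M i t : nat) : i = (2 * t + 1)%N -> (i <= M)%N ->
  ((M - i) + (i * (1 + M)) * (2 * M) = (2 * M - 1) * (i * (1 + M)) + (t + 1) * (2 * M))%N.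
Proof. move=> -> h; nia. Qed.

Lemma binom1 (a M b k : nat) : exists c, ((a + M * b) ^ k = a ^ k + M * c)%N.
Proof.
elim: k => [|k [c IH]]; first by exists 0%N; rewrite !expn0 muln0 addn0.
exists (b * a ^ k + c * a + M * b * c)%N; rewrite !expnS IH; move: (a ^ k)%N => x; nia.
Qed.

Lemma binom2 (a M k : nat) : exists c, ((a + M) ^ k = a ^ k + k * M * a ^ k.-1 + M * M * c)%N.
Proof.
elim: k => [|k [c IH]]; first by exists 0%N; rewrite !expn0 !mul0n !muln0 !addn0.
exists (c * a + k * a ^ k.-1 + M * c)%N; rewrite expnS IH /=.
case: k IH => [|k] IH /=; first by rewrite !expn0 expn1; nia.
rewrite !expnS; move: (a ^ k)%N => x; nia.
Qed.

Lemma dv_sum (L q : nat) (f g : nat -> algC) :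
  (forall j, (j < L)%N -> exists2 y, y \in Aint & f j = g j + q%:R * y) ->
  exists2 y, y \in Aint & \sum_(j < L) f j = \sum_(j < L) g j + q%:R * y.
Proof.
elim: L => [|L IH] h; first by exists 0; rewrite ?big_ord0 ?mulr0 ?addr0.
have [y1 y1A e1] := IH (fun j hj => h j (ltnW hj)).
have [y2 y2A e2] := h L (ltnSn L).
exists (y1 + y2); first by rewrite rpredD.
by rewrite !big_ord_recr /= e1 e2; ring.
Qed.

Lemma sum_split (a b : nat) (F : nat -> algC) :
  \sum_(j < a + b) F j = \sum_(j < a) F j + \sum_(j < b) F (a + j)%N.
Proof. by rewrite big_split_ord. Qed.

Lemma sum_per (q M : nat) (g : nat -> algC) :
  \sum_(j < q * M) g (j %% M)%N = q%:R * \sum_(j < M) g j.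
Proof.
elim: q => [|q IH]; first by rewrite mul0n big_ord0 mul0r.
rewrite mulSnr (sum_split _ _ (fun j => g (j %% M)%N)) IH -addn1 natrD mulrDl mul1r; congr (_ + _).
by apply: eq_bigr => j _; rewrite modnMDl modn_small.
Qed.

Lemma sum_rev (L : nat) (G : nat -> algC) :
  \sum_(j < L) G j = \sum_(j < L) G (L - j.+1)%N.
Proof. by rewrite -(big_mkord xpredT) big_rev_mkord subn0. Qed.

Definition USum (chi : nat -> algC) (k L : nat) := \sum_(j < L) chi j * (j%:R) ^+ k.

Lemma Schar_U p m chi k n : prime p -> (1 <= m)%N -> dirichlet_char (p ^ m) chi ->
  (1 <= n)%N -> Schar k (p ^ n) chi = USum chi k (p ^ n).
Proof.
move=> hp hm hD hn; have p0 := prime_gt0 hp.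
have pn0 : (0 < p ^ n)%N by rewrite expn_gt0 p0.
rewrite /Schar /USum big_nat_recr //=.
rewrite (chi0p hp hm hD (dvdn_exp hn (dvdnn p))) mul0r addr0.
rewrite -(big_mkord xpredT (fun j => chi j * (j%:R) ^+ k)) [in RHS]big_ltn //=.
by rewrite (chi0p hp hm hD (dvdn0 p)) mul0r add0r.
Qed.


Lemma stepB N chi k L M : dirichlet_char N chi ->
  exists2 y, y \in Aint &
    USum chi k L = \sum_(j < L) chi j * (((j %% M)%N)%:R) ^+ k + M%:R * y.
Proof.
move=> hD; rewrite /USum.
apply: (@dv_sum L M (fun j => chi j * (j%:R) ^+ k)
                          (fun j => chi j * (((j %% M)%N)%:R) ^+ k)) => j _.
have [c hc] := binom1 (j %% M) M (j %/ M) k.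
exists (chi j * c%:R); first by rewrite rpredM ?rpred_nat ?(chi_Aint hD).
have e : j = (j %% M + M * (j %/ M))%N by rewrite addnC mulnC -divn_eq.
have -> : (j%:R ^+ k : algC) = ((j %% M) ^ k + M * c)%N%:R by rewrite -hc -e natrX.
rewrite natrD natrM natrX; ring.
Qed.

Lemma mul_inj N a : (0 < N)%N -> coprime a N -> forall x y : nat, (x < N)%N -> (y < N)%N ->
  ((a * x) %% N = (a * y) %% N)%N -> x = y.
Proof.
move=> N0 ca.
suff H : forall x y : nat, (x <= y)%N -> (y < N)%N -> ((a * x) %% N = (a * y) %% N)%N -> x = y.
  move=> x y hx hy e; case: (leqP x y) => hxy; first exact: H.
  by apply/esym/H => //; apply: ltnW.
move=> x y hxy hy e.
have : (N %| a * y - a * x)%N.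
  by rewrite -eqn_mod_dvd ?leq_mul2l ?hxy ?orbT // e.
rewrite -mulnBr Gauss_dvdr; last by rewrite coprime_sym.
case: (posnP (y - x)) => [h0|hpos].
  by move=> _; apply/eqP; rewrite eqn_leq hxy -subn_eq0 h0.
move=> /(dvdn_leq hpos) hle; exfalso.
have : (y - x < N)%N by apply: leq_ltn_trans (leq_subr _ _) hy.
by rewrite ltnNge hle.
Qed.

Lemma stepC p m chi k : prime p -> (1 <= m)%N -> dirichlet_char (p ^ m) chi ->
  primitive_char (p ^ m) chi ->
  \sum_(j < p ^ m) chi j * (((j %% p ^ m.-1)%N)%:R) ^+ k = 0.
Proof.
move=> hp hm hD hPr.
have p1 := prime_gt1 hp.
set N := (p ^ m)%N; set d := (p ^ m.-1)%N.
have dN : (d %| N)%N by rewrite dvdn_exp2l // leq_pred.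
have dltN : (d < N)%N by rewrite ltn_exp2l // prednK // leqnn.
have [a [ca ha1 hca]] := hPr d dN dltN.
have N0 : (0 < N)%N by rewrite expn_gt0 (prime_gt0 hp).
have hD' := hD; case: hD' => _ h1 hM _ _.
set V := \sum_(j < N) _.
pose f (j : 'I_N) : 'I_N := Ordinal (ltn_pmod (a * j) N0).
have finj : injective f.
  move=> x y /(congr1 val) /= e; apply: val_inj => /=.
  exact: (mul_inj N0 ca (ltn_ord x) (ltn_ord y) e).
have eV : V = chi a * V.
  rewrite {1}/V (reindex_inj finj) /= mulr_sumr; apply: eq_bigr => j _.
  rewrite (chi_mod hD) hM mulrA; congr (_ * _).
  rewrite modn_dvdm // -modnMml ha1 modnMml mul1n //.
have : V * (1 - chi a) = 0 by rewrite mulrBr mulr1 mulrC -eV subrr.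
move/eqP; rewrite mulf_eq0 subr_eq0 => /orP [/eqP //|].
by rewrite eq_sym (negbTE hca).
Qed.

Lemma stepD p m chi k n : prime p -> dirichlet_char (p ^ m) chi -> (m <= n)%N ->
  \sum_(j < p ^ n.+1) chi j * (((j %% p ^ n)%N)%:R) ^+ k = p%:R * USum chi k (p ^ n).
Proof.
move=> hp hD hmn.
have dN : (p ^ m %| p ^ n)%N by rewrite dvdn_exp2l.
rewrite expnS /USum -(sum_per _ _ (fun j => chi j * (j%:R) ^+ k)).
apply: eq_bigr => j _; congr (_ * _).
by rewrite -(chi_mod hD) -[in RHS](chi_mod hD) modn_dvdm.
Qed.

Lemma part1 p m chi : prime p -> (1 <= m)%N -> dirichlet_char (p ^ m) chi ->
  primitive_char (p ^ m) chi ->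
  forall k n, (m <= n)%N -> dv (p ^ n.-1) (USum chi k (p ^ n)).
Proof.
move=> hp hm hD hPr k n hmn.
have -> : n = (m + (n - m))%N by rewrite subnKC.
elim: (n - m)%N => [|d IH].
  rewrite addn0; have [y yA ->] := stepB k (p ^ m) (p ^ m.-1) hD.
  by rewrite (stepC k hp hm hD hPr) add0r; exists y.
have [y yA ->] := stepB k (p ^ (m + d.+1)) (p ^ (m + d)) hD.
rewrite addnS (stepD k hp hD (leq_addr _ _)).
have [z zA ->] := IH.
exists (z + y); first by rewrite rpredD.
have e : (p * p ^ (m + d).-1 = p ^ (m + d))%N.
  by rewrite -expnS prednK // addn_gt0 hm.
rewrite /= mulrDr mulrA -natrM e; done.
Qed.

Lemma sq1 (x : algC) : x * x = 1 -> x = 1 \/ x = -1.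
Proof.
move=> h; have : (x - 1) * (x + 1) = 0 by rewrite mulrDr mulrBl h; ring.
move/eqP; rewrite mulf_eq0 subr_eq0 addr_eq0 => /orP [/eqP|/eqP]; by [left|right].
Qed.

Lemma q01 (q M : nat) : (q * M + 1 < 2 * M)%N -> (q = 0 \/ q = 1)%N.
Proof.
case: q => [|[|q]] hr; [by left|by right|].
exfalso; move: hr; rewrite -addn2 mulnDl; move: (q * M)%N => x; lia.
Qed.

Lemma c1M m chi : (2 <= m)%N -> dirichlet_char (2 ^ m) chi ->
  primitive_char (2 ^ m) chi -> chi (1 + 2 ^ m.-1)%N = -1.
Proof.
move=> hm hD hPr.
have eN : (2 ^ m = 2 * 2 ^ m.-1)%N by rewrite -expnS prednK // ltnW.
have M2 : (2 ^ m.-1 = 2 * 2 ^ m.-2)%N by rewrite -expnS; congr expn; lia.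
have hD' := hD; case: hD' => _ h1 hM _ _.
set M := (2 ^ m.-1)%N in eN M2 *.
have dM : (M %| 2 ^ m)%N by rewrite eN dvdn_mull.
have ltM : (M < 2 ^ m)%N by rewrite eN M2; lia.
have [a [ca ha1 hca]] := hPr M dM ltM.
have sq : chi (1 + M)%N * chi (1 + M)%N = 1.
  rewrite -hM -h1 -(chi_per hD 1 (1 + 2 ^ m.-2)).
  congr chi; rewrite eN M2; lia.
case: (sq1 sq) => // e1.
exfalso; move: hca; rewrite -(chi_mod hD).
have r1 : ((a %% 2 ^ m) %% M = 1)%N.
  by rewrite modn_dvdm ?eN ?dvdn_mull // ha1 modn_small // M2; lia.
have rl : (a %% 2 ^ m < 2 * M)%N by rewrite -eN ltn_pmod // expn_gt0.
set r := (a %% 2 ^ m)%N in r1 rl *.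
have er : r = ((r %/ M) * M + 1)%N by rewrite {1}(divn_eq r M) r1.
move: rl; rewrite er; set q := (r %/ M)%N => hr.
have : (q = 0 \/ q = 1)%N.
  exact: q01 hr.
clearbody q; case=> ->; rewrite ?mul0n ?mul1n ?add0n ?h1 ?eqxx //.
by rewrite addnC e1 eqxx.
Qed.

Lemma oddstep m chi : (2 <= m)%N -> dirichlet_char (2 ^ m) chi ->
  primitive_char (2 ^ m) chi -> forall j, chi (2 ^ m.-1 + j)%N = - chi j.
Proof.
move=> hm hD hPr j.
have eN : (2 ^ m = 2 * 2 ^ m.-1)%N by rewrite -expnS prednK // ltnW.
have M2 : (2 ^ m.-1 = 2 * 2 ^ m.-2)%N by rewrite -expnS; congr expn; lia.
have hm1 : (1 <= m)%N by apply: ltnW.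
have hD' := hD; case: hD' => _ h1 hM _ _.
have e1 := c1M hm hD hPr.
set M := (2 ^ m.-1)%N in eN M2 e1 *.
case: (boolP (odd j)) => oj; last first.
  have d2 : (2 %| j)%N by rewrite dvdn2.
  rewrite (chi0p (p := 2) _ hm1 hD d2) // (chi0p (p := 2) _ hm1 hD) ?oppr0 //.
  by rewrite dvdn_addr // M2 dvdn_mulr.
have ej := odd_double_half j; rewrite oj in ej.
set t := j./2 in ej.
have e : (j * (1 + M) = (M + j) + t * 2 ^ m)%N.
  rewrite eN -ej; clearbody t M; rewrite -mul2n; nia.
by rewrite -(chi_per hD (M + j) t) -e hM e1 mulrN1.
Qed.

Lemma eps m chi : (2 <= m)%N -> dirichlet_char (2 ^ m) chi ->
  chi (2 ^ m - 1)%N = 1 \/ chi (2 ^ m - 1)%N = -1.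
Proof.
move=> hm hD; apply: sq1.
have hD' := hD; case: hD' => _ h1 hM _ _.
rewrite -hM -h1 -(chi_per hD 1 (2 ^ m - 2)); congr chi.
have : (2 ^ 1 <= 2 ^ m)%N by rewrite leq_exp2l // ltnW.
rewrite expn1.
move: (2 ^ m)%N => x hx; nia.
Qed.

Lemma refl m chi : (2 <= m)%N -> dirichlet_char (2 ^ m) chi ->
  primitive_char (2 ^ m) chi -> forall i, (i <= 2 ^ m.-1)%N ->
  chi (2 ^ m.-1 - i)%N = - chi (2 ^ m - 1)%N * chi i.
Proof.
move=> hm hD hPr i hi.
have eN : (2 ^ m = 2 * 2 ^ m.-1)%N by rewrite -expnS prednK // ltnW.
have M2 : (2 ^ m.-1 = 2 * 2 ^ m.-2)%N by rewrite -expnS; congr expn; lia.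
have hm1 : (1 <= m)%N by apply: ltnW.
have hD' := hD; case: hD' => _ h1 hM _ _.
have e1 := c1M hm hD hPr.
set M := (2 ^ m.-1)%N in eN M2 e1 hi *.
case: (boolP (odd i)) => oi; last first.
  have d2 : (2 %| i)%N by rewrite dvdn2.
  rewrite (chi0p (p := 2) _ hm1 hD d2) // (chi0p (p := 2) _ hm1 hD) ?mulr0 //.
  by rewrite dvdn_sub // M2 dvdn_mulr.
have ei := odd_double_half i; rewrite oi in ei.
set t := i./2 in ei.
have ei' : i = (2 * t + 1)%N by rewrite -ei -mul2n addnC.
have e := t1 ei' hi; rewrite -eN in e.
rewrite -(chi_per hD (M - i) (i * (1 + M))) e (chi_per hD) !hM e1; ring.
Qed.

Lemma halfsum m chi e : (3 <= m)%N -> dirichlet_char (2 ^ m) chi ->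
  primitive_char (2 ^ m) chi -> dv 2 (USum chi e (2 ^ m.-1)).
Proof.
move=> hm hD hPr.
have hm2 : (2 <= m)%N by apply: ltnW.
have hm1 : (1 <= m)%N by apply: ltnW.
have M2 : (2 ^ m.-1 = 2 ^ m.-2 + 2 ^ m.-2)%N by rewrite addnn -mul2n -expnS; congr expn; lia.
have L2 : (2 ^ m.-2 = 2 * 2 ^ (m - 3))%N by rewrite -expnS; congr expn; lia.
set L := (2 ^ m.-2)%N in M2 L2.
have [y yA ->] : exists2 y, y \in Aint &
    USum chi e (2 ^ m.-1) = \sum_(j < 2 ^ m.-1) chi j + 2%:R * y.
  rewrite /USum; apply: (@dv_sum _ 2 (fun j => chi j * (j%:R) ^+ e) chi) => j _.
  case: (boolP (odd j)) => oj; last first.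
    have d2 : (2 %| j)%N by rewrite dvdn2.
    by exists 0; rewrite ?(chi0p (p := 2) _ hm1 hD d2) // !mul0r mulr0 addr0.
  have ej := odd_double_half (j ^ e); rewrite oddX oj orbT in ej.
  exists (chi j * ((j ^ e)./2)%:R); first by rewrite rpredM ?rpred_nat ?(chi_Aint hD).
  set h := ((j ^ e)./2)%N in ej *.
  by rewrite -natrX -ej /= natrD -mul2n natrM; ring.
suff [z zA hz] : dv 2 (\sum_(j < 2 ^ m.-1) chi j).
  by exists (z + y); rewrite ?rpredD // mulrDr -hz.
rewrite M2 sum_split.
have -> : \sum_(j < L) chi (L + j)%N = - chi (2 ^ m - 1)%N * \sum_(j < L) chi j.
  rewrite (sum_rev L (fun j => chi (L + j)%N)) mulr_sumr.
  transitivity (\sum_(j < L) - chi (2 ^ m - 1)%N * chi j.+1).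
    apply: eq_bigr => j _.
    rewrite -(refl hm2 hD hPr (i := j.+1)); last by rewrite M2; have := ltn_ord j; lia.
    congr chi; rewrite M2; have := ltn_ord j; lia.
  have c0 : chi 0%N = 0 by rewrite (chi0p (p := 2) _ hm1 hD (dvdn0 2)).
  have cL : chi L = 0 by rewrite (chi0p (p := 2) _ hm1 hD) // L2 dvdn_mulr.
  set c := - chi (2 ^ m - 1)%N.
  have E1 : \sum_(i < L.+1) c * chi i = c * chi 0%N + \sum_(i < L) c * chi i.+1.
    by rewrite big_ord_recl.
  have E2 : \sum_(i < L.+1) c * chi i = \sum_(i < L) c * chi i + c * chi L.
    by rewrite big_ord_recr.
  move: E1 E2; rewrite c0 cL !mulr0 addr0 add0r => -> //.
case: (eps hm2 hD) => ->.
  by exists 0; rewrite // mulN1r subrr mulr0.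
by exists (\sum_(j < L) chi j); rewrite ?rpred_sum // => *; rewrite ?(chi_Aint hD) // opprK mul1r; ring.
Qed.

Lemma base2 m chi k : (2 <= m)%N -> dirichlet_char (2 ^ m) chi ->
  primitive_char (2 ^ m) chi -> (3 <= m)%N \/ ~~ odd k ->
  dv (2 ^ m) (USum chi k (2 ^ m)).
Proof.
move=> hm hD hPr hc.
have hm1 : (1 <= m)%N by apply: ltnW.
have eN : (2 ^ m = 2 ^ m.-1 + 2 ^ m.-1)%N by rewrite addnn -mul2n -expnS prednK.
have M2 : (2 ^ m.-1 = 2 * 2 ^ m.-2)%N by rewrite -expnS; congr expn; lia.
set M := (2 ^ m.-1)%N in eN M2 *.
set L := (2 ^ m.-2)%N in M2.
have [y yA hy] : exists2 y, y \in Aint &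
    USum chi k (2 ^ m) = - (k * M)%:R * USum chi k.-1 M + (M * M)%:R * y.
  rewrite /USum eN (sum_split _ _ (fun j => chi j * (j%:R) ^+ k)) -big_split /=.
  rewrite mulr_sumr.
  apply: (@dv_sum _ _ (fun j => chi j * (j%:R) ^+ k + chi (M + j)%N * ((M + j)%N%:R) ^+ k)
                      (fun j => - (k * M)%:R * (chi j * (j%:R) ^+ k.-1))) => j _.
  have [c hc'] := binom2 j M k.
  exists (- (chi j * c%:R)); first by rewrite rpredN rpredM ?rpred_nat ?(chi_Aint hD).
  rewrite (oddstep hm hD hPr) -!natrX addnC hc' !natrD !natrM !natrX; ring.
rewrite hy.
have [k' Ek] : exists k', (k = 2 * k')%N \/ (3 <= m)%N.
  case: hc => [h|h]; first by exists 0%N; right.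
  exists k./2; left; have := odd_double_half k; rewrite (negbTE h) add0n -mul2n.
  by move=> ->.
case: Ek => [Ek|h3].
  exists (- (k'%:R * USum chi k.-1 M) + L%:R * y).
    by rewrite rpredD ?rpredN ?rpredM ?rpred_nat //; apply: rpred_sum => j _; rewrite rpredM ?rpredX ?rpred_nat ?(chi_Aint hD).
  rewrite eN Ek M2 !natrD !natrM; ring.
have [z zA ->] := halfsum k.-1 h3 hD hPr.
exists (- (k%:R * z) + L%:R * y); first by rewrite rpredD ?rpredN ?rpredM ?rpred_nat.
rewrite eN M2 !natrD !natrM; ring.
Qed.

Lemma pairstep m chi k n : dirichlet_char (2 ^ m) chi -> (m <= n)%N ->
  exists2 Y, Y \in Aint &
  USum chi k (2 ^ n.+1) = 2%:R * USum chi k (2 ^ n)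
     + (k * 2 ^ n)%:R * USum chi k.-1 (2 ^ n) + (2 ^ n * 2 ^ n)%:R * Y.
Proof.
move=> hD hmn.
have eN : (2 ^ n.+1 = 2 ^ n + 2 ^ n)%N by rewrite addnn -mul2n -expnS.
have eM : (2 ^ n = 2 ^ (n - m) * 2 ^ m)%N by rewrite -expnD subnK.
set M := (2 ^ n)%N in eN eM *.
have [Y YA hY] : exists2 Y, Y \in Aint &
    \sum_(j < M) (chi j * (j%:R) ^+ k + chi (M + j)%N * ((M + j)%N%:R) ^+ k) =
    \sum_(j < M) (2%:R * (chi j * (j%:R) ^+ k) + (k * M)%:R * (chi j * (j%:R) ^+ k.-1))
    + (M * M)%:R * Y.
  apply: (@dv_sum _ _ (fun j => chi j * (j%:R) ^+ k + chi (M + j)%N * ((M + j)%N%:R) ^+ k)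
                      (fun j => 2%:R * (chi j * (j%:R) ^+ k) + (k * M)%:R * (chi j * (j%:R) ^+ k.-1))) => j _.
  have [c hc'] := binom2 j M k.
  exists (chi j * c%:R); first by rewrite rpredM ?rpred_nat ?(chi_Aint hD).
  have -> : chi (M + j)%N = chi j by rewrite addnC eM (chi_per hD).
  rewrite -!natrX addnC hc' !natrD !natrM !natrX; ring.
exists Y => //.
rewrite /USum eN (sum_split _ _ (fun j => chi j * (j%:R) ^+ k)) -big_split /= hY.
by rewrite big_split /= -!mulr_sumr.
Qed.

Lemma part2 m chi k : (2 <= m)%N -> dirichlet_char (2 ^ m) chi ->
  primitive_char (2 ^ m) chi -> (3 <= m)%N \/ ~~ odd k ->
  forall n, (m <= n)%N -> dv (2 ^ n) (USum chi k (2 ^ n)).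
Proof.
move=> hm hD hPr hc n hmn.
have hm1 : (1 <= m)%N by apply: ltnW.
have -> : n = (m + (n - m))%N by rewrite subnKC.
elim: (n - m)%N => [|d IH]; first by rewrite addn0; apply: base2.
have hmd : (m <= m + d)%N by apply: leq_addr.
rewrite addnS.
have [Y YA ->] := pairstep k hD hmd.
have [w wA ->] := IH.
have [z zA ->] := part1 (p := 2) (ltac:(by [])) hm1 hD hPr k.-1 hmd.
set n' := (m + d)%N in hmd *.
have e4 : (2 ^ n' = 4 * 2 ^ n'.-2)%N.
  by rewrite -[4%N]/(2 ^ 2)%N -expnD; congr expn; lia.
have e2 : (2 ^ n'.-1 = 2 * 2 ^ n'.-2)%N.
  by rewrite -expnS; congr expn; lia.
have e8 : (2 ^ n'.+1 = 8 * 2 ^ n'.-2)%N.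
  by rewrite -[8%N]/(2 ^ 3)%N -expnD; congr expn; lia.
exists (w + k%:R * (2 ^ n'.-2)%:R * z + (2 ^ n'.-1)%:R * Y).
  by rewrite !rpredD ?rpredM ?rpred_nat.
rewrite e8 e2 e4 !natrM; ring.
Qed.

Lemma no_prim1 chi : dirichlet_char (2 ^ 1) chi -> primitive_char (2 ^ 1) chi -> False.
Proof.
move=> hD hPr.
have [a [ca _ hca]] := hPr 1%N (dvd1n _) (ltac:(by [])).
move: hca; rewrite -(chi_mod hD) expn1 modn2.
move: ca; rewrite expn1 coprimen2 => ->.
by case: hD => _ -> _ _ _; rewrite eqxx.
Qed.

Theorem lemma2p4 (p m : nat) (chi : nat -> algC) :
  prime p -> (1 <= m)%N ->
  dirichlet_char (p ^ m) chi -> primitive_char (p ^ m) chi ->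
  (forall n k : nat, (m <= n)%N -> cong0_mod (Schar k (p ^ n) chi) (p ^ n.-1))
  /\
  (p = 2%N -> forall n k : nat,
     ((3 <= m)%N \/ (m = 2%N /\ ~~ odd k) \/ (m = 1%N /\ odd k)) ->
     (maxn m 2 <= n)%N ->
     cong0_mod (Schar k (2 ^ n) chi) (2 ^ n)).
Proof.
move=> hp hm hD hPr; split.
  move=> n k hmn.
  have hn : (1 <= n)%N by apply: leq_trans hmn.
  rewrite (Schar_U k hp hm hD hn); apply: dv_cong; first by rewrite expn_gt0 prime_gt0.
  exact: (part1 hp hm hD hPr k hmn).
move=> p2 n k hc; subst p; rewrite geq_max => /andP [hmn hn2].
have hn : (1 <= n)%N by apply: leq_trans hmn.
have pr2 : prime 2 by [].
rewrite (Schar_U k pr2 hm hD hn); apply: dv_cong; first by rewrite expn_gt0.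
case: hc => [h3|[[h2 hk]|[h1 hk]]].
- by apply: (part2 (k := k) (ltnW h3) hD hPr (or_introl h3)).
- have h2' : (2 <= m)%N by rewrite h2.
  by apply: (part2 (k := k) h2' hD hPr (or_intror hk)).
- by exfalso; subst m; apply: no_prim1 hD hPr.
Qed.
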